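(* Let $\mathcal{H}$ be a real Hilbert space, let $A:\mathcal{H}\rightrightarrows\mathcal{H}$ be maximal monotone with $A^{-1}(0)\neq\emptyset$, let $\theta>0$, let $p\geq1$ be an integer, and let $(x,\lambda):[0,+\infty)\to\mathcal{H}\times(0,+\infty)$ be a global solution of \[ \dot{x}(t)+x(t)-(I+\lambda(t)A)^{-1}x(t)=0,\qquad \lambda(t)\,\|(I+\lambda(t)A)^{-1}x(t)-x(t)\|^{p-1}=\theta, \] with $x(0)\in\{x\in\mathcal{H}:0\notin Ax\}$. Assume the error bound condition: there exist $\delta>0$ and $\kappa>0$ such that for all $x\in\mathcal{H}$, $\textsc{dist}(0,Ax)\leq\delta$ implies $\textsc{dist}(x,A^{-1}(0))\leq\kappa\,\textsc{dist}(0,Ax)$. Then there exist a sufficiently large $t_0>0$ and a constant $c>0$ with $c\leq 2\left(1+\frac{\kappa}{\lambda(0)}\right)^{-2}$ such that $\textsc{dist}(x(t),A^{-1}(0))=O(e^{-ct/2})$ for all $t>t_0$.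
   Context: $\textsc{dist}(x,S)=\inf_{z\in S}\|x-z\|$; $A^{-1}(0)=\{x:0\in Ax\}$; $(I+\lambda A)^{-1}$ is the resolvent of $A$ of index $\lambda$. *)

(* Defs.v *)
From HB Require Import structures.
From mathcomp Require Import all_boot all_order all_algebra.
From mathcomp Require Import all_classical all_reals all_analysis.
Set Implicit Arguments. Unset Strict Implicit. Unset Printing Implicit Defensive.
Import Order.TTheory GRing.Theory Num.Theory.
Import numFieldNormedType.Exports.
Local Open Scope classical_set_scope.
Local Open Scope ring_scope.

Section Defs.
Context {R : realType} {H : normedModType R}.

Definition inner_product (ip : H -> H -> R) : Prop :=
  [/\ forall x y, ip x y = ip y x,
      forall (a : R) x y z, ip (a *: x + y) z = a * ip x z + ip y z
    & forall x, ip x x = `|x| ^+ 2].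

(* set-valued operators A : H ⇉ H, u ∈ A x written A x u *)
Definition monotone_op (ip : H -> H -> R) (A : H -> set H) : Prop :=
  forall x y u v, A x u -> A y v -> 0 <= ip (u - v) (x - y).

Definition maximal_monotone (ip : H -> H -> R) (A : H -> set H) : Prop :=
  monotone_op ip A /\
  forall B : H -> set H, monotone_op ip B -> (forall x, A x `<=` B x) -> B = A.

Definition zeros (A : H -> set H) : set H := [set x | A x 0].

(* resolvent (I + lam A)^{-1} x : the y with x ∈ y + lam A y *)
Definition resolvent (A : H -> set H) (lam : R) (x : H) : H :=
  xget x [set y | A y (lam^-1 *: (x - y))].

Definition dist (x : H) (S : set H) : R := inf [set `|x - z| | z in S].

End Defs.

(* Main.v *)
Require Import Defs.
From HB Require Import structures.
From mathcomp Require Import all_boot all_order all_algebra.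
From mathcomp Require Import all_classical all_reals all_analysis.
From mathcomp Require Import lra ring.
Import Order.TTheory GRing.Theory Num.Theory.
Import numFieldNormedType.Exports.
Local Open Scope classical_set_scope.
Local Open Scope ring_scope.

Section IP.
Context {R : realType} {H : normedModType R} {ip : H -> H -> R}.
Hypothesis hip : inner_product ip.

Lemma ipC x y : ip x y = ip y x. Proof. by case: hip. Qed.
Lemma ipxx x : ip x x = `|x| ^+ 2. Proof. by case: hip. Qed.
Lemma ipZDl a x y z : ip (a *: x + y) z = a * ip x z + ip y z. Proof. by case: hip. Qed.
Lemma ip0l z : ip 0 z = 0.
Proof. have := ipZDl 1 0 0 z; rewrite scaler0 addr0 mul1r => h; lra. Qed.
Lemma ipDl x y z : ip (x + y) z = ip x z + ip y z.
Proof. by have := ipZDl 1 x y z; rewrite scale1r mul1r. Qed.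
Lemma ipZl a x z : ip (a *: x) z = a * ip x z.
Proof. by rewrite -(addr0 (a *: x)) ipZDl ip0l addr0. Qed.
Lemma ipNl x z : ip (- x) z = - ip x z.
Proof. by rewrite -scaleN1r ipZl mulN1r. Qed.
Lemma ipBl x y z : ip (x - y) z = ip x z - ip y z.
Proof. by rewrite ipDl ipNl. Qed.
Lemma ip0r z : ip z 0 = 0. Proof. by rewrite ipC ip0l. Qed.
Lemma ipDr x y z : ip z (x + y) = ip z x + ip z y.
Proof. by rewrite ipC ipDl !(ipC z). Qed.
Lemma ipZr a x z : ip z (a *: x) = a * ip z x.
Proof. by rewrite ipC ipZl ipC. Qed.
Lemma ipNr x z : ip z (- x) = - ip z x.
Proof. by rewrite ipC ipNl ipC. Qed.
Lemma ipBr x y z : ip z (x - y) = ip z x - ip z y.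
Proof. by rewrite ipDr ipNr. Qed.

Lemma ip_le x y : ip x y <= `|x| * `|y|.
Proof.
have h : ip (x + y) (x + y) <= (`|x| + `|y|) ^+ 2.
  rewrite ipxx; apply: lerXn2r; rewrite ?nnegrE ?addr_ge0 //; exact: ler_normD.
move: h; rewrite ipDl !ipDr !ipxx (ipC y x) sqrrD; lra.
Qed.

Lemma ip_abs x y : `|ip x y| <= `|x| * `|y|.
Proof.
rewrite ler_norml ip_le andbT; have := ip_le (- x) y.
rewrite ipNl normrN; lra.
Qed.

Lemma ip_cvg {T : Type} (F : set_system T) {FF : Filter F} (a b : T -> H) a0 b0 :
  a @ F --> a0 -> b @ F --> b0 -> (fun t => ip (a t) (b t)) @ F --> ip a0 b0.
Proof.
move=> ca cb.
have e t : ip (a t) (b t) = ip a0 b0 + (ip (a t - a0) (b t) + ip a0 (b t - b0)).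
  rewrite ipBl ipBr; lra.
have hm : (fun t => ip (a t - a0) (b t) + ip a0 (b t - b0)) @ F --> (0:R).
  have hb : (fun t => `|a t - a0| * `|b t| + `|a0| * `|b t - b0|) @ F --> (0:R).
    have ca0 : (fun t => `|a t - a0|) @ F --> (0:R).
      have h := cvg_norm (cvgB ca (@cvg_cst _ a0 _ F _)); rewrite subrr normr0 in h; exact: h.
    have cb0 : (fun t => `|b t - b0|) @ F --> (0:R).
      have h := cvg_norm (cvgB cb (@cvg_cst _ b0 _ F _)); rewrite subrr normr0 in h; exact: h.
    have h := cvgD (cvgM ca0 (cvg_norm cb)) (cvgM (@cvg_cst _ `|a0| _ F _) cb0); rewrite mul0r mulr0 addr0 in h; exact: h.
  have hn : \forall t \near F, - (`|a t - a0| * `|b t| + `|a0| * `|b t - b0|) <=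
     ip (a t - a0) (b t) + ip a0 (b t - b0) <= `|a t - a0| * `|b t| + `|a0| * `|b t - b0|.
    near=> t; have h1 := ip_abs (a t - a0) (b t); have h2 := ip_abs a0 (b t - b0).
    move: h1 h2; rewrite !ler_norml => /andP[? ?] /andP[? ?]; apply/andP; split; lra.
  apply: (squeeze_cvgr hn _ hb).
  have h := cvgN hb; rewrite oppr0 in h; exact: h.
have h := cvgD (@cvg_cst _ (ip a0 b0) _ F _) hm; rewrite addr0 in h.
have -> : (fun t => ip (a t) (b t)) = (fun t => ip a0 b0 + (ip (a t - a0) (b t) + ip a0 (b t - b0))).
  by apply/funext => t; exact: e.
exact: h.
Unshelve. all: end_near.
Qed.

End IP.

Set Implicit Arguments. Unset Strict Implicit. Unset Printing Implicit Defensive.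

Section Hull.
Context {R : realType} {H : normedModType R} {ip : H -> H -> R}.
Hypothesis hip : inner_product ip.
Variable G : H -> H -> Prop.
Hypothesis Gmono : forall y v y' v', G y v -> G y' v' -> 0 <= ip (v - v') (y - y').

Inductive hull : H -> H -> R -> Prop :=
| hull_base y v : G y v -> hull y v (ip y v)
| hull_mix (t : R) Y1 V1 c1 Y2 V2 c2 : 0 <= t -> t <= 1 ->
    hull Y1 V1 c1 -> hull Y2 V2 c2 ->
    hull ((1 - t) *: Y1 + t *: Y2) ((1 - t) *: V1 + t *: V2) ((1 - t) * c1 + t * c2).

Lemma hull_base_pair y v Y V c : G y v -> hull Y V c -> ip y V + ip Y v <= ip y v + c.
Proof.
move=> Gyv; elim=> {Y V c}.
  move=> y' v' Gy'v'; have := Gmono Gyv Gy'v'.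
  rewrite (ipBl hip) !(ipBr hip) (ipC hip v y) (ipC hip v y') (ipC hip v' y) (ipC hip v' y').
  lra.
move=> t Y1 V1 c1 Y2 V2 c2 t0 t1 _ IH1 _ IH2.
rewrite (ipDr hip) !(ipZr hip) (ipDl hip) !(ipZl hip).
have t1' : 0 <= 1 - t by rewrite subr_ge0.
have h1 := ler_wpM2l t1' IH1; have h2 := ler_wpM2l t0 IH2.
move: h1 h2; rewrite !mulrDr; lra.
Qed.

Lemma hull_pair Y V c Y' V' c' : hull Y V c -> hull Y' V' c' -> ip Y V' + ip Y' V <= c + c'.
Proof.
move=> h h'; elim: h => {Y V c}.
  by move=> y v Gyv; exact: hull_base_pair.
move=> t Y1 V1 c1 Y2 V2 c2 t0 t1 _ IH1 _ IH2.
rewrite (ipDr hip) !(ipZr hip) (ipDl hip) !(ipZl hip).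
have t1' : 0 <= 1 - t by rewrite subr_ge0.
have h1 := ler_wpM2l t1' IH1; have h2 := ler_wpM2l t0 IH2.
move: h1 h2; rewrite !mulrDr; lra.
Qed.

Definition phi (Y V : H) (c : R) := - ip (Y - V) (Y - V) / 4 - c.

Lemma phi_le0 Y V c : hull Y V c -> phi Y V c <= 0.
Proof.
move=> h; have := hull_pair h h.
have : 0 <= ip (Y + V) (Y + V) by rewrite (ipxx hip) sqr_ge0.
rewrite /phi (ipBl hip) !(ipBr hip) (ipDl hip) !(ipDr hip) (ipC hip V Y); lra.
Qed.

Lemma phi_mix t Y1 V1 c1 Y2 V2 c2 :
  phi ((1 - t) *: Y1 + t *: Y2) ((1 - t) *: V1 + t *: V2) ((1 - t) * c1 + t * c2) =
  (1 - t) * phi Y1 V1 c1 + t * phi Y2 V2 c2 + t * (1 - t) / 4 * ip ((Y1 - V1) - (Y2 - V2)) ((Y1 - V1) - (Y2 - V2)).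
Proof.
rewrite /phi.
have -> : (1 - t) *: Y1 + t *: Y2 - ((1 - t) *: V1 + t *: V2) = (1 - t) *: (Y1 - V1) + t *: (Y2 - V2).
  by rewrite !scalerBr opprD addrACA.
move: (Y1 - V1) (Y2 - V2) => s1 s2.
rewrite (ipBl hip) !(ipBr hip) (ipDl hip) !(ipDr hip) !(ipZl hip) !(ipZr hip) (ipC hip s2 s1).
by field; rewrite ?pnatr_eq0 /=.
Qed.

End Hull.


Lemma le0_small {R : realType} (E K : R) : 0 <= K ->
  (forall t, 0 < t -> t <= 1 -> E <= t * K) -> E <= 0.
Proof.
move=> K0 h; rewrite leNgt; apply/negP => E0.
have hKE : 0 < K + E by lra.
have t0 : 0 < E / (K + E) by rewrite divr_gt0.
have t1 : E / (K + E) <= 1 by rewrite ler_pdivrMr // mul1r; lra.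
have := h _ t0 t1; rewrite mulrAC ler_pdivlMr // => h2.
have : E * E <= 0 by move: h2; rewrite mulrDr; lra.
by rewrite leNgt mulr_gt0.
Qed.

Section Core.
Context {R : realType} {H : completeNormedModType R} {ip : H -> H -> R}.
Hypothesis hip : inner_product ip.
Variable G : H -> H -> Prop.
Hypothesis Gmono : forall y v y' v', G y v -> G y' v' -> 0 <= ip (v - v') (y - y').
Hypothesis Gne : exists y v, G y v.

Local Notation hullG := (@hull _ _ ip G).
Local Notation ph := (@phi _ _ ip).

Lemma core : exists x, forall y v, G y v -> ip (x + v) (x - y) <= 0.
Proof.
pose S := [set r | exists Y V c, hullG Y V c /\ r = ph Y V c].
have S0 : S !=set0.
  by case: Gne => y [v Gyv]; exists (ph y v (ip y v)), y, v, (ip y v); split => //; exact: hull_base.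
have Sub : ubound S 0 by move=> _ [Y [V [c [hc ->]]]]; exact: phi_le0 hc.
have hS : has_sup S by split => //; exists 0.
pose sig := sup S.
have sig0 : sig <= 0 by exact: ge_sup.
have adh : forall n : nat, exists p : H * H * R,
    hullG p.1.1 p.1.2 p.2 /\ sig - n.+1%:R^-1 < ph p.1.1 p.1.2 p.2.
  move=> n; have e0 : 0 < n.+1%:R^-1 :> R by rewrite invr_gt0.
  have [e [Y [V [c [hc ->]]]] he] := @sup_adherent _ S _ e0 hS.
  by exists (Y, V, c).
have [P HP] := choice adh.
pose s n := (P n).1.1 - (P n).1.2.
pose f n := ph (P n).1.1 (P n).1.2 (P n).2.
have fle n : f n <= sig.
  apply: (ub_le_sup (E := S)); first by exists 0.
  exists (P n).1.1, (P n).1.2, (P n).2; split => //; by case: (HP n).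
have fgt n : sig - n.+1%:R^-1 < f n by case: (HP n).
have inS Y V c : hullG Y V c -> ph Y V c <= sig.
  move=> hc; apply: (ub_le_sup (E := S)); first by exists 0.
  by exists Y, V, c.
have h20 : 0 <= 2^-1 :> R by rewrite invr_ge0.
have h21 : 2^-1 <= 1 :> R by rewrite invf_le1 // ler1n.
have mid n m : ip (s n - s m) (s n - s m) <= 8 * (n.+1%:R^-1 + m.+1%:R^-1).
  have := inS _ _ _ (hull_mix h20 h21 (HP n).1 (HP m).1).
  rewrite phi_mix //; have := fgt n; have := fgt m; rewrite /f /s.
  move: (n.+1%:R^-1 : R) (m.+1%:R^-1 : R) => a b; lra.
have cs : cvg (s @ \oo).
  apply/cauchy_cvgP/cauchy_exP => eps eps0.
  have e16 : 0 < eps^+2/16 by rewrite divr_gt0 // exprn_gt0.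
  have := @cvg_harmonic R; move/cvgrPdist_lt => /(_ _ e16); case=> N _ hN.
  exists (s N); exists N => // n /= Nn.
  rewrite -ball_normE /ball_ /=.
  have h1 := mid N n; have hNN := hN N (leqnn N).
  have hnN : n.+1%:R^-1 <= N.+1%:R^-1 :> R.
    by rewrite lef_pV2 ?posrE ?ltr0Sn // ler_nat ltnS.
  rewrite (ipxx hip) in h1; rewrite /= sub0r normrN ger0_norm ?invr_ge0 // in hNN.
  rewrite -(@ltr_pXn2r _ 2) // ?nnegrE ?normr_ge0 ?ltW //.
  move: h1 hNN hnN; move: (n.+1%:R^-1 : R) (N.+1%:R^-1 : R) => a b; lra.
move/cvg_ex: cs => [l sl].
have fcv : f @ \oo --> sig.
  have lo : (fun n => sig - harmonic n) @ \oo --> sig.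
    have h := cvgB (@cvg_cst _ sig nat \oo _) (@cvg_harmonic R); rewrite subr0 in h; exact: h.
  apply: (squeeze_cvgr _ lo (@cvg_cst _ sig nat \oo _)).
  by near=> n; rewrite fle andbT /= ltW // fgt.
exists (2^-1 *: l) => y v Gyv.
pose a := y - v; pose fj := ph y v (ip y v); pose Q := ip (l - a) (l - a).
have Q0 : 0 <= Q by rewrite /Q (ipxx hip) sqr_ge0.
have key : forall t, 0 < t -> t <= 1 -> fj + Q / 4 - sig <= t * (Q / 4).
  move=> t t0 t1.
  have hn n : t * (fj + (1 - t) / 4 * ip (s n - a) (s n - a) - f n) <= harmonic n.
    have := inS _ _ _ (hull_mix (ltW t0) t1 (HP n).1 (hull_base Gyv)).
    rewrite phi_mix // -/(s n) -/a -/fj -/(f n).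
    have := fgt n; rewrite /=.
    move: (n.+1%:R^-1 : R) (f n) (ip (s n - a) (s n - a)) => e fn Qn.
    have -> : t * (fj + (1 - t) / 4 * Qn - fn) = ((1 - t) * fn + t * fj + t * (1 - t) / 4 * Qn) - fn.
      by field; rewrite ?pnatr_eq0 /=.
    lra.
  pose proof (@ip_cvg _ _ _ hip nat \oo _ _ _ _ _ (cvgB sl (@cvg_cst _ a nat \oo _)) (cvgB sl (@cvg_cst _ a nat \oo _))) as c1.
  pose proof (cvgM (@cvg_cst _ t nat \oo _) (cvgB (cvgD (@cvg_cst _ fj nat \oo _) (cvgM (@cvg_cst _ ((1 - t) / 4) nat \oo _) c1)) fcv)) as c2.
  have hnn : \forall n \near \oo, t * (fj + (1 - t) / 4 * ip (s n - a) (s n - a) - f n) <= harmonic n.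
    by near=> n; exact: hn n.
  pose proof (ler_cvg_to c2 (@cvg_harmonic R) hnn) as hle; move: hle.
  rewrite pmulr_rle0 //.
  have -> : (1 - t) / 4 * Q = Q / 4 - t * (Q / 4) by field; rewrite ?pnatr_eq0 /=.
  lra.
have := le0_small (divr_ge0 Q0 (ler0n R 4)) key.
have -> : ip (2^-1 *: l + v) (2^-1 *: l - y) = fj + Q / 4.
  rewrite /fj /Q /a /phi.
  rewrite !(ipDl hip, ipBl hip, ipDr hip, ipBr hip, ipZl hip, ipZr hip, ipNl hip, ipNr hip).
  rewrite (ipC hip y l) (ipC hip v l) (ipC hip v y).
  by field; rewrite ?pnatr_eq0 /=.
lra.
Unshelve. all: end_near.
Qed.

End Core.


Lemma minty {R : realType} {H : completeNormedModType R} (ip : H -> H -> R) (A : H -> set H) :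
  inner_product ip -> maximal_monotone ip A -> zeros A !=set0 ->
  forall (lam : R) (w : H), 0 < lam ->
  A (resolvent A lam w) (lam^-1 *: (w - resolvent A lam w)).
Proof.
move=> hip [Amono Amax] [z Az] lam w lam0.
apply: (@xgetPex _ w [set y | A y (lam^-1 *: (w - y))]).
pose G y v := exists u, A y u /\ v = lam *: u - w.
have Gmono : forall y v y' v', G y v -> G y' v' -> 0 <= ip (v - v') (y - y').
  move=> y v y' v' [u [Ayu ->]] [u' [Ayu' ->]].
  have -> : lam *: u - w - (lam *: u' - w) = lam *: (u - u').
    by rewrite scalerBr opprB addrA subrK.
  by rewrite (ipZl hip); apply: mulr_ge0; [exact: ltW | exact: Amono].
have Gne : exists y v, G y v by exists z, (lam *: 0 - w), 0.
have [x hx] := core hip Gmono Gne.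
exists x; rewrite /=.
pose us := lam^-1 *: (w - x).
pose B y v := A y v \/ (y = x /\ v = us).
have lam0' : lam != 0 by rewrite gt_eqF.
have key y u : A y u -> 0 <= ip (u - us) (y - x).
  move=> Ayu; have := hx y (lam *: u - w) (ex_intro _ u (conj Ayu erefl)).
  have -> : ip (u - us) (y - x) = - lam^-1 * ip (x + (lam *: u - w)) (x - y).
    rewrite /us !(ipDl hip, ipBl hip, ipDr hip, ipBr hip, ipZl hip, ipZr hip, ipNl hip, ipNr hip).
    by field.
  move=> h; rewrite mulNr oppr_ge0; apply: mulr_ge0_le0 => //.
  by rewrite invr_ge0 ltW.
have Bmono : monotone_op ip B.
  move=> y1 y2 u1 u2 [h1|[-> ->]] [h2|[-> ->]].
  - exact: Amono.
  - exact: key.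
  - have := key _ _ h2; rewrite -(opprB u2) -(opprB y2) (ipNl hip) (ipNr hip) opprK //.
  - by rewrite subrr (ip0l hip).
have BA := Amax B Bmono (fun y v h => or_introl h).
by rewrite -BA; right.
Qed.


Section Deriv.
Context {R : realType} {H : normedModType R} {ip : H -> H -> R}.
Hypothesis hip : inner_product ip.

Lemma deriv_sq (x : R -> H) (z : H) (t : R) : derivable x t 1 ->
  is_derive t 1 (fun s => ip (x s - z) (x s - z)) (2 * ip ('D_1 x t) (x t - z)).
Proof.
move=> Hd.
pose q := fun h : R => h^-1 *: ((x \o shift t) (h *: 1) - x t).
have Hq : q @ 0^' --> 'D_1 x t by exact: Hd.
have Hx : (fun h : R => (x \o shift t) (h *: 1)) @ 0^' --> x t.
  have h1 : (fun h : R => h *: q h + x t) @ 0^' --> x t.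
    have Hid : (fun h : R => h) @ 0^' --> (0:R) by exact: cvg_within.
    pose proof (cvgD (cvgZ Hid Hq) (@cvg_cst _ (x t) R 0^' _)) as hh.
    by rewrite scale0r add0r in hh.
  apply: cvg_trans h1; apply: near_eq_cvg; near=> h.
  have hn0 : h != 0 by near: h; exact: nbhs_dnbhs_neq.
  by rewrite /q scalerA mulfV // scale1r subrK.
pose phi := fun s => ip (x s - z) (x s - z).
have Hphi : (fun h : R => h^-1 *: ((phi \o shift t) (h *: 1) - phi t)) @ 0^' --> 2 * ip ('D_1 x t) (x t - z).
  have -> : (fun h : R => h^-1 *: ((phi \o shift t) (h *: 1) - phi t)) =
      (fun h => ip (q h) (((x \o shift t) (h *: 1) - z) + (x t - z))).
    apply/funext => h; rewrite /q /phi /=.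
    have -> : x (h *: 1 + t) - x t = (x (h *: 1 + t) - z) - (x t - z) by rewrite opprB addrA subrK.
    move: (x (h *: 1 + t) - z) (x t - z) => A B.
    rewrite (ipZl hip) (ipBl hip) !(ipDr hip) (ipC hip B A); rewrite /GRing.scale /=; ring.
  have Hs : (fun h : R => ((x \o shift t) (h *: 1) - z) + (x t - z)) @ 0^' --> (x t - z) + (x t - z).
    pose proof (cvgD (cvgB Hx (@cvg_cst _ z R 0^' _)) (@cvg_cst _ (x t - z) R 0^' _)) as hh.
    exact: hh.
  pose proof (@ip_cvg _ _ _ hip R 0^' _ _ _ _ _ Hq Hs) as hh.
  by rewrite (ipDr hip) -mulr2n -mulr_natl in hh.
apply: DeriveDef; first by apply/cvg_ex; exists (2 * ip ('D_1 x t) (x t - z)); exact: Hphi.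
exact: cvg_lim.
Unshelve. all: end_near.
Qed.

Lemma decay_step (x : R -> H) (z : H) (m t s : R) :
  0 < t -> t <= s ->
  (forall u, t <= u -> u <= s -> derivable x u 1) ->
  (forall u, t < u -> u < s -> ip ('D_1 x u) (x u - z) + m <= 0) ->
  ip (x s - z) (x s - z) + 2 * m * (s - t) <= ip (x t - z) (x t - z).
Proof.
move=> t0 ts dx hd.
pose phi := fun u => ip (x u - z) (x u - z).
pose psi := phi + (2 * m) \*: (@id R).
have dpsi u : t <= u -> u <= s -> is_derive u 1 psi (2 * ip ('D_1 x u) (x u - z) + (2 * m) *: 1).
  move=> tu us; apply: is_deriveD; first exact: deriv_sq (dx _ tu us).
have df : forall u, u \in `]t, s[ -> derivable psi u 1.
  by move=> u; rewrite in_itv /= => /andP[tu us]; by case: (dpsi _ (ltW tu) (ltW us)).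
have dfle0 : forall u, u \in `]t, s[ -> derive1 psi u <= 0.
  move=> u; rewrite in_itv /= => /andP[tu us].
  rewrite derive1E (@derive_val _ _ _ _ _ _ _ (dpsi _ (ltW tu) (ltW us))).
  have := hd _ tu us; rewrite /GRing.scale /= mulr1; lra.
have cf : {within `[t, s], continuous psi}.
  apply: derivable_within_continuous => u; rewrite in_itv /= => /andP[tu us].
  by case: (dpsi _ tu us).
have : psi s <= psi t.
  by apply: (@ler0_derive1_le_cc R psi t s df dfle0 cf) => //; rewrite in_itv /= lexx ts.
have e u : psi u = ip (x u - z) (x u - z) + 2 * m * u by [].
rewrite !e mulrBr; lra.
Qed.

End Deriv.


Section Dist.
Context {R : realType} {H : normedModType R}.
Implicit Types (S : set H) (x y z : H).

Lemma dist_ne x S : S !=set0 -> [set `|x - z| | z in S] !=set0.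
Proof. by case=> z Sz; exists `|x - z|, z. Qed.

Lemma dist_lb x S : has_lbound [set `|x - z| | z in S].
Proof. by exists 0 => _ [z _ <-]. Qed.

Lemma dist_ge0 x S : S !=set0 -> 0 <= dist x S.
Proof. by move=> S0; apply: lb_le_inf; [exact: dist_ne | move=> _ [z _ <-]]. Qed.

Lemma dist_le x S z : S z -> dist x S <= `|x - z|.
Proof. by move=> Sz; apply: (ge_inf (dist_lb x S)); exists z. Qed.

Lemma dist_approx x S e : S !=set0 -> 0 < e -> exists2 z, S z & `|x - z| < dist x S + e.
Proof.
move=> S0 e0; have [_ [z Sz <-] h] := inf_adherent e0 (conj (dist_ne x S0) (dist_lb x S)).
by exists z.
Qed.

Lemma dist_tri x y S : S !=set0 -> dist x S <= `|x - y| + dist y S.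
Proof.
move=> S0; rewrite -lerBlDl; apply: lb_le_inf; first exact: dist_ne.
move=> _ [z Sz <-]; rewrite lerBlDl.
apply: (le_trans (dist_le x Sz)).
by rewrite -(subrKA y) ler_normD.
Qed.

Lemma dist_sq_le x S (X : R) : S !=set0 -> (forall z, S z -> X <= `|x - z| ^+ 2) ->
  X <= dist x S ^+ 2.
Proof.
move=> S0 h; have d0 := dist_ge0 x S0.
case: (leP X 0) => [X0|X0]; first by apply: (le_trans X0); exact: sqr_ge0.
rewrite leNgt; apply/negP => hX.
have hs : dist x S < Num.sqrt X.
  by rewrite -(@ltr_pXn2r _ 2) // ?nnegrE ?sqrtr_ge0 // sqr_sqrtr // ltW.
have e0 : 0 < Num.sqrt X - dist x S by rewrite subr_gt0.
have [z Sz hz] := dist_approx x S0 e0.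
rewrite (addrC (dist x S)) subrK in hz.
have := h z Sz; apply/negP; rewrite -ltNge.
by rewrite -(@ltr_pXn2r _ 2) ?nnegrE ?sqrtr_ge0 // sqr_sqrtr ?ltW in hz.
Qed.

End Dist.

Unset Implicit Arguments. Set Strict Implicit. Set Printing Implicit Defensive.

Theorem theorem3p4 (R : realType) (H : completeNormedModType R)
  (ip : H -> H -> R) (A : H -> set H) (theta : R) (p : nat)
  (x : R -> H) (lam : R -> R) :
  inner_product ip ->
  maximal_monotone ip A ->
  zeros A !=set0 ->
  0 < theta -> (1 <= p)%N ->
  (* global solution on [0, +oo) *)
  (forall t, 0 <= t -> 0 < lam t) ->
  {within `[0, +oo[, continuous x} ->
  (forall t, 0 < t -> derivable x t 1) ->
  (forall t, 0 < t -> 'D_1 x t + x t - resolvent A (lam t) (x t) = 0) ->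
  (forall t, 0 <= t ->
     lam t * `|resolvent A (lam t) (x t) - x t| ^+ p.-1 = theta) ->
  ~ A (x 0) 0 ->
  (* error bound condition, with constants delta and kappa *)
  forall delta kappa : R, 0 < delta -> 0 < kappa ->
  (forall y : H, A y !=set0 -> dist 0 (A y) <= delta ->
     dist y (zeros A) <= kappa * dist 0 (A y)) ->
  exists t0 c : R, [/\ 0 < t0, 0 < c,
    c <= 2 * (1 + kappa / lam 0) ^- 2 &
    exists M : R, forall t, t0 < t ->
      dist (x t) (zeros A) <= M * expR (- (c * t) / 2)].
Proof.
move=> hip hmax hZ th0 p1 lam0 _ xder ode cons _ delta kappa de0 ka0 EB.
pose J t := resolvent A (lam t) (x t).
have HJ t : 0 <= t -> A (J t) ((lam t)^-1 *: (x t - J t)).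
  by move=> t0; apply: (minty hip hmax hZ); exact: lam0.
have HD t : 0 < t -> 'D_1 x t = J t - x t.
  by move=> t0; have := ode t t0; move/subr0_eq; rewrite -/(J t) => <-; rewrite addrK.
pose r t := `|J t - x t|.
pose Z := zeros A.
pose d t := dist (x t) Z.
have d0 t : 0 <= d t by exact: dist_ge0.
have ha z u : Z z -> 0 < u -> ip ('D_1 x u) (x u - z) + r u ^+ 2 <= 0.
  move=> Zz u0; rewrite HD //.
  have hm := hmax.1 _ _ _ _ (HJ u (ltW u0)) Zz.
  have lu : 0 < (lam u)^-1 by rewrite invr_gt0 lam0 // ltW.
  rewrite subr0 (ipZl hip) (pmulr_rge0 _ lu) in hm.
  have -> : x u - z = (x u - J u) + (J u - z) by rewrite addrA subrK.
  rewrite (ipDr hip) -(opprB (J u)) (ipNr hip) (ipxx hip) -/(r u).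
  rewrite -[J u - x u]opprB (ipNl hip); lra.
have hb t s m : 0 < t -> t <= s -> (forall u, t < u -> u < s -> m <= r u ^+ 2) ->
    d s ^+ 2 + 2 * m * (s - t) <= d t ^+ 2.
  move=> t0 ts hm; apply: dist_sq_le => // z Zz.
  have dx : forall u, t <= u -> u <= s -> derivable x u 1.
    by move=> u tu _; apply: xder; exact: lt_le_trans tu.
  have hd : forall u, t < u -> u < s -> ip ('D_1 x u) (x u - z) + m <= 0.
    move=> u tu us; have := ha z u Zz (lt_trans t0 tu); have := hm u tu us; lra.
  have := @decay_step _ _ _ hip x z m t s t0 ts dx hd.
  rewrite !(ipxx hip).
  have hds : d s ^+ 2 <= `|x s - z| ^+ 2.
    by apply: lerXn2r; rewrite ?nnegrE ?d0 ?normr_ge0 //; exact: dist_le.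
  lra.
have hc t s : 0 < t -> t <= s -> d s <= d t.
  move=> t0 ts; have := hb t s 0 t0 ts (fun u _ _ => sqr_ge0 _).
  rewrite mulr0 mul0r addr0 => h.
  by rewrite -(@ler_pXn2r _ 2) ?nnegrE ?d0.
pose L := 1 + theta * delta.
have thd0 : 0 < theta * delta by rewrite mulr_gt0.
have L1 : 1 <= L by rewrite /L lerDl ltW.
have L0 : 0 < L by lra.
pose K1 := 1 + kappa * L / theta.
pose m0 := theta * delta / L.
have m00 : 0 < m0 by rewrite divr_gt0.
have m0le : m0 <= theta * delta by rewrite ler_pdivrMr // ler_peMr // ltW.
have m01 : m0 <= 1 by rewrite ler_pdivrMr // mul1r /L lerDr.
pose K2 := K1 ^+ 2 + d 1 ^+ 2 / m0 ^+ 2.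
have hd u : 1 <= u -> d u ^+ 2 <= K2 * r u ^+ 2.
  move=> u1; have u0 : 0 < u by exact: lt_le_trans ltr01 u1.
  have hcons := cons u (ltW u0); rewrite -/(J u) -/(r u) in hcons.
  have rp : r u ^+ p = r u * r u ^+ p.-1 by rewrite -exprS prednK.
  have r0 : 0 <= r u by exact: normr_ge0.
  have lu0 : 0 < lam u by exact: lam0 (ltW u0).
  case: (leP (r u ^+ p) (theta * delta)) => hrp.
    pose w := (lam u)^-1 *: (x u - J u).
    have hn : `|w| * theta = r u ^+ p.
      rewrite normrZ ger0_norm ?invr_ge0 ?ltW // distrC -/(r u) -hcons rp.
      by field; rewrite gt_eqF.
    have Lb : r u ^+ p.-1 <= L.
      case: (leP (r u) 1) => h1; first by apply: le_trans L1; exact: exprn_ile1.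
      apply: le_trans (_ : r u ^+ p <= L); last by apply: le_trans hrp _; rewrite /L lerDr.
      by rewrite ler_eXn2l // leq_pred.
    have hwd : `|w| <= delta by rewrite -(ler_pM2r th0) hn mulrC.
    have hwL : `|w| * theta <= L * r u by rewrite hn rp mulrC ler_wpM2r.
    have hdz : dist 0 (A (J u)) <= `|w|.
      by have := dist_le 0 (HJ u (ltW u0)); rewrite sub0r normrN.
    have hne : A (J u) !=set0 by exists w; exact: HJ u (ltW u0).
    have heb := EB (J u) hne (le_trans hdz hwd).
    have htri := dist_tri (x u) (J u) hZ; rewrite distrC -/(r u) -/Z -/(d u) in htri.
    have hdK : d u <= K1 * r u.
      have e : K1 * r u = r u + kappa * ((L * r u) / theta) by rewrite /K1; field; rewrite gt_eqF.
      rewrite e; have hw' : `|w| <= (L * r u) / theta by rewrite ler_pdivlMr.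
      have := ler_wpM2l (ltW ka0) (le_trans hdz hw').
      move: heb htri; rewrite -/Z; lra.
    have K10 : 0 <= K1 * r u by exact: le_trans (d0 u) hdK.
    apply: (le_trans (_ : d u ^+ 2 <= (K1 * r u) ^+ 2)).
      by apply: lerXn2r; rewrite ?nnegrE ?d0.
    rewrite exprMn /K2 mulrDl lerDl mulr_ge0 ?sqr_ge0 //.
    by rewrite divr_ge0 ?sqr_ge0.
  have hm0 : m0 <= r u.
    case: (leP 1 (r u)) => h1; first exact: le_trans m01 h1.
    have : r u ^+ p <= r u.
      by rewrite rp ler_piMr // exprn_ile1 // ltW.
    lra.
  have hd1 : d u ^+ 2 <= d 1 ^+ 2.
    by apply: lerXn2r; rewrite ?nnegrE ?d0 //; apply: hc.
  apply: le_trans hd1 _.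
  have e : d 1 ^+ 2 = d 1 ^+ 2 / m0 ^+ 2 * m0 ^+ 2 by rewrite divfK // expf_neq0 // gt_eqF.
  rewrite {1}e /K2 mulrDl.
  apply: le_trans (_ : d 1 ^+ 2 / m0 ^+ 2 * r u ^+ 2 <= _); last by rewrite lerDr mulr_ge0 ?sqr_ge0.
  apply: ler_wpM2l; first by rewrite divr_ge0 ?sqr_ge0.
  by apply: lerXn2r; rewrite ?nnegrE // ltW.
have K11 : 1 <= K1 by rewrite /K1 lerDl divr_ge0 ?mulr_ge0 ?ltW.
have K2pos : 0 < K2.
  rewrite /K2; apply: (lt_le_trans (_ : 0 < K1 ^+ 2)); first by rewrite exprn_gt0 //; lra.
  by rewrite lerDl divr_ge0 ?sqr_ge0.
have he t : 1 <= t -> d (t + 1) ^+ 2 * (1 + 2 / K2) <= d t ^+ 2.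
  move=> t1; have t0 : 0 < t by exact: lt_le_trans ltr01 t1.
  have tt1 : t <= t + 1 by rewrite lerDl.
  have := hb t (t + 1) (d (t + 1) ^+ 2 / K2) t0 tt1.
  rewrite addrAC subrr add0r mulr1.
  have -> : d (t + 1) ^+ 2 * (1 + 2 / K2) = d (t + 1) ^+ 2 + 2 * (d (t + 1) ^+ 2 / K2).
    by field; rewrite gt_eqF.
  apply => u tu ut1.
  have u1 : 1 <= u by apply: le_trans t1 (ltW tu).
  rewrite ler_pdivrMr // mulrC.
  apply: le_trans (hd u u1).
  apply: lerXn2r; rewrite ?nnegrE ?d0 //; apply: hc => //; last exact: ltW.
  exact: lt_le_trans ltr01 u1.
pose c1 := ln (1 + 2 / K2).
pose cb := 2 * (1 + kappa / lam 0) ^- 2.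
pose c := Num.min c1 cb.
have c10 : 0 < c1 by apply: ln_gt0; rewrite ltrDl divr_gt0.
have cb0 : 0 < cb.
  have lz := lam0 0 (lexx 0).
  by rewrite /cb mulr_gt0 // invr_gt0 exprn_gt0 // addr_gt0 // divr_gt0.
have c0 : 0 < c by rewrite /c lt_min c10 cb0.
have cexp : 1 <= expR (- c) * (1 + 2 / K2).
  have q0 : 0 < 1 + 2 / K2 by rewrite addr_gt0 // divr_gt0.
  have : expR c <= 1 + 2 / K2.
    rewrite -[X in _ <= X]lnK ?posrE // ler_expR /c ge_min lexx //.
  rewrite expRN => h; rewrite -ler_pdivrMl ?invr_gt0 ?expR_gt0 // invrK mulr1 //.
have hf n : d (1 + n%:R) ^+ 2 <= expR (- c * n%:R) * d 1 ^+ 2.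
  elim: n => [|n IH]; first by rewrite addr0 mulr0 expR0 mul1r.
  rewrite -natr1 addrA mulrDr mulr1 expRD.
  have hn1 : 1 <= 1 + n%:R :> R by rewrite lerDl.
  have h1 := he (1 + n%:R) hn1.
  set X := d (1 + n%:R + 1) ^+ 2.
  have X0 : 0 <= X by exact: sqr_ge0.
  apply: (le_trans (_ : X <= expR (- c) * (X * (1 + 2 / K2)))).
    by rewrite mulrCA -{1}(mulr1 X) ler_wpM2l.
  apply: le_trans (ler_wpM2l (expR_ge0 _) (le_trans h1 IH)) _.
  by rewrite mulrA (mulrC (expR (- c))).
exists 2, c; split => //; first by rewrite /c ge_min lexx orbT.
exists (d 1 * expR c) => t t2.
have t10 : 0 <= t - 1 by lra.
move: (truncn_itv t10) => /andP[].
move: (Num.truncn (t - 1)) => n nle ngt.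
have hdt : d t <= d (1 + n%:R).
  apply: hc; last by lra.
  by apply: (lt_le_trans ltr01); rewrite lerDl.
have hdt2 : d t ^+ 2 <= expR (- c * n%:R) * d 1 ^+ 2.
  apply: le_trans (hf n); apply: lerXn2r; rewrite ?nnegrE ?d0 //.
have hexp : expR (- c * n%:R) <= expR (c + c) * expR (- (c * t) / 2) * expR (- (c * t) / 2).
  rewrite -!expRD ler_expR.
  have : c * (t - 2) <= c * n%:R.
    by apply: ler_wpM2l; [exact: ltW | move: ngt; rewrite -natr1; lra].
  lra.
have hM : 0 <= d 1 * expR c * expR (- (c * t) / 2) by rewrite !mulr_ge0 ?expR_ge0.
rewrite -(@ler_pXn2r _ 2) ?nnegrE ?d0 //.
apply: le_trans hdt2 _.
apply: le_trans (ler_wpM2r (sqr_ge0 (d 1)) hexp) _.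
rewrite !exprMn !expr2 expRD le_eqVlt; apply/orP; left; apply/eqP; ring.
Qed.
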